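(* Let $p>3$ be prime, $t\in\{1,3,p,3p\}$, and $1\le r\le 3p-1$ with $\gcd(r,3p)=1$. Then $\Lambda(3p,r,t)=\{1\}$.
   Context: $|r|_m$ is the multiplicative order of $r$ modulo $m$ (with $|r|_1=1$). $S_k(x):=1+x+\cdots+x^{k-1}$, $S_0:=0$. For $m\ge1$ with $\gcd(r,m)=1$, $\kappa(m,r,t):=\dfrac{m|r|_m}{\gcd(m,\,tS_{|r|_m}(r))}$. For $d\in\{1,3,p,3p\}$, $\Lambda(d,r,t):=\{\ell>0:\ \ell \text{ divides } \frac{|r|_{3p}}{\gcd(\kappa(d,r,t),|r|_{3p})}\text{ and }\gcd(r^{\ell\kappa(d,r,t)}-1,3p)=d\}$. *)

(* Defs.v *)
From mathcomp Require Import all_boot.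
Set Implicit Arguments. Unset Strict Implicit. Unset Printing Implicit Defensive.

(* |r|_m : multiplicative order of r modulo m (m >= 1, coprime r m):
   least k >= 1 with r^k = 1 (mod m). Such k exists and is <= m when
   coprime r m, so searching in 1..m suffices. *)
Definition ordm (m r : nat) : nat :=
  head 0 [seq k <- iota 1 m | r ^ k == 1 %[mod m]].

Definition Ssum (k x : nat) : nat := \sum_(i < k) x ^ i.

Definition kappa (m r t : nat) : nat :=
  (m * ordm m r) %/ gcdn m (t * Ssum (ordm m r) r).

Definition Lambda (p d r t : nat) : pred nat := fun l =>
  [&& 0 < l,
      l %| ordm (3 * p) r %/ gcdn (kappa d r t) (ordm (3 * p) r) &
      gcdn (r ^ (l * kappa d r t) - 1) (3 * p) == d].

(* Main.v *)
Require Import Defs.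
From mathcomp Require Import all_boot.
From mathcomp Require Import all_solvable.

Lemma totient_le n : totient n <= n.
Proof.
rewrite totient_count_coprime.
apply: leq_trans (_ : \sum_(0 <= d < n) 1 <= n).
  by apply: leq_sum => i _; case: (coprime n i).
by rewrite sum_nat_const_nat subn0 muln1.
Qed.



Lemma ordm_spec m r : 0 < m -> coprime r m ->
  0 < ordm m r /\ r ^ ordm m r = 1 %[mod m].
Proof.
move=> m0 cop.
have Hin : totient m \in [seq k <- iota 1 m | r ^ k == 1 %[mod m]].
  rewrite mem_filter mem_iota (Euler_exp_totient cop) eqxx /=.
  by rewrite totient_gt0 m0 /= add1n ltnS totient_le.
rewrite /ordm.
have : head 0 [seq k <- iota 1 m | r ^ k == 1 %[mod m]] \in
       [seq k <- iota 1 m | r ^ k == 1 %[mod m]].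
  by move: Hin; case: [seq k <- iota 1 m | r ^ k == 1 %[mod m]] => //= x s _; rewrite mem_head.
rewrite mem_filter mem_iota => /andP [/eqP H /andP [H1 _]].
by split.
Qed.

Theorem lemma5p5 (p t r : nat) :
  prime p -> 3 < p -> t \in [:: 1; 3; p; 3 * p] ->
  1 <= r <= 3 * p - 1 -> coprime r (3 * p) ->
  forall l : nat, Lambda p (3 * p) r t l <-> l = 1.
Proof.
move=> pp p3 _ _ cop l.
have m0 : 0 < 3 * p by rewrite muln_gt0 /= prime_gt0.
have r0 : 0 < r.
  move: cop; case: r => // /eqP; rewrite gcd0n => H.
  have : 3 <= 3 * p by rewrite leq_pmulr // prime_gt0.
  by rewrite H.
have [o0 ro] := @ordm_spec (3 * p) r m0 cop.
set o := ordm (3 * p) r in o0 ro.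
set g := gcdn (3 * p) (t * Ssum o r).
have Hk : kappa (3 * p) r t = (3 * p) %/ g * o.
  by rewrite /kappa -/o -/g divn_mulAC // dvdn_gcdl.
have Hg : gcdn (kappa (3 * p) r t) o = o.
  by rewrite Hk; apply/gcdn_idPr; rewrite dvdn_mull.
have Hr : r ^ kappa (3 * p) r t = 1 %[mod 3 * p].
  by rewrite Hk mulnC expnM -modnXm ro modnXm exp1n.
have Hd : gcdn (r ^ (1 * kappa (3 * p) r t) - 1) (3 * p) = 3 * p.
  apply/gcdn_idPr; rewrite mul1n -eqn_mod_dvd; [by rewrite Hr | by rewrite expn_gt0 r0].
rewrite /Lambda -/o Hg divnn o0; split.
  by case/and3P => l0; rewrite dvdn1 => /eqP.
by move=> ->; rewrite Hd eqxx.
Qed.
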